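(* Let $\Gamma=(C_0,L_{\alpha_1},\dots,L_{\alpha_n},C_n)$ be a gallery in $\Phi$ and $0=i_0\le i_1\le\dots\le i_k=n$ integers. For $l=0,\dots,k-1$ let $\Psi_l$ be a saturated root subsystem of $\Phi$ and $\Delta_l$ a gallery in $\Phi$ lifting $(\Gamma_{[i_l,i_{l+1}]})_{\Psi_l}$, such that for each $l<k-1$ the final chamber of $\Delta_l$ equals the initial chamber of $\Delta_{l+1}$ (this holds in particular for the construction where, given $\Delta_l$ with final chamber $D$, one picks a nonempty $X\subset\Phi^s(D)\cap\Phi^+(C_{i_{l+1}})$, sets $\Psi_{l+1}=\mathbb R X\cap\Phi$ and lets $\Delta_{l+1}$ be the lifting of $(\Gamma_{[i_{l+1},i_{l+2}]})_{\Psi_{l+1}}$ with initial chamber $D$, and symmetrically to the left). Let $p_l:[1,|\Delta_l|]\to[1,i_{l+1}-i_l]$ be the increasing embedding with image $I_{\Psi_l}(\Gamma_{[i_l,i_{l+1}]})$, and define $p:[1,|\Delta_0|+\dots+|\Delta_{k-1}|]\to[1,n]$ by $p(j)=p_l(j-|\Delta_0|-\dots-|\Delta_{l-1}|)+i_l$ for $|\Delta_0|+\dots+|\Delta_{l-1}|<j\le|\Delta_0|+\dots+|\Delta_l|$. Then $(\Delta_0\cup\Delta_1\cup\dots\cup\Delta_{k-1},\Gamma)$ is a $p$-pair with positive sign and positive cosign.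
   Context: $E$ is a finite-dimensional real Euclidean space with inner product $(\cdot,\cdot)$; $\Phi\subset E$ is a finite (reduced) root system (not necessarily spanning, not necessarily crystallographic) with reflections $\omega_\alpha$ through $L_\alpha=\alpha^\perp$. A root subsystem is a nonempty $\Psi\subset\Phi$ stable under $\omega_\alpha$, $\alpha\in\Psi$; it is saturated if $\Psi=\mathbb R\Psi\cap\Phi$. $\mathrm{Ch}_X$ ($X\subset\Phi$) is the set of connected components of $E\setminus\bigcup_{\alpha\in X}L_\alpha$; $C_\Psi$ is the chamber of $\mathrm{Ch}_\Psi$ containing $C\in\mathrm{Ch}_\Phi$. Chambers are connected through $L_\alpha$ if the intersection of their closures with $L_\alpha$ has nonempty interior in $L_\alpha$. A gallery in $X$ is $(C_0,L_{\alpha_1},C_1,\dots,L_{\alpha_n},C_n)$ with $C_j\in\mathrm{Ch}_X$, $\alpha_j\in X$, $C_{j-1},C_j$ connected through $L_{\alpha_j}$; length $n$, initial chamber $C_0$, final chamber $C_n$. $\Gamma_{[i,j]}=(C_i,L_{\alpha_{i+1}},\dots,L_{\alpha_j},C_j)$. If the final chamber of $\Gamma$ equals the initial chamber of $\Delta=(C_n,L_{\beta_1},\dots,L_{\beta_m},D_m)$, then $\Gamma\cup\Delta=(C_0,L_{\alpha_1},\dots,L_{\alpha_n},C_n,L_{\beta_1},\dots,L_{\beta_m},D_m)$. $I_\Psi(\Gamma)=\{i:\alpha_i\in\Psi\}=\{i_1<\dots<i_m\}$ and $\Gamma_\Psi=((C_0)_\Psi,L_{\alpha_{i_1}},(C_{i_1})_\Psi,\dots,L_{\alpha_{i_m}},(C_{i_m})_\Psi)$.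 $\Phi^+(C)=\{\alpha\in\Phi:(e,\alpha)>0\ \forall e\in C\}$, $\Phi^s(C)$ the simple system in $\Phi^+(C)$; similarly for $\Psi$. $C$ lifts $D\in\mathrm{Ch}_\Psi$ if $\Psi^s(D)\subset\Phi^s(C)$; a gallery in $\Phi$ lifts a gallery in $\Psi$ if the wall sequences coincide and each $j$th chamber of the first lifts the $j$th chamber of the second. For galleries $\Gamma=(C_0,L_{\alpha_1},\dots,C_n)$, $\Delta=(D_0,L_{\beta_1},\dots,D_m)$ in $\Phi$ and increasing $p:[1,m]\to[1,n]$, $(\Delta,\Gamma)$ is a $p$-pair if $L_{\alpha_{p(i)}}=L_{\beta_i}$ for all $i$; its sign has $\epsilon_i=1$ iff $L_{\beta_i}$ does not separate $D_i$ and $C_{p(i)}$, its cosign has $\mu_i=1$ iff $L_{\beta_i}$ does not separate $D_{i-1}$ and $C_{p(i)-1}$ (otherwise $-1$); positive means all entries are $1$. *)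

(* Defs.v *)
From HB Require Import structures.
From mathcomp Require Import all_boot all_order all_algebra.
From mathcomp Require Import all_classical all_reals all_analysis.
Set Implicit Arguments. Unset Strict Implicit. Unset Printing Implicit Defensive.
Import Order.TTheory GRing.Theory Num.Theory.
Import numFieldNormedType.Exports.
Local Open Scope classical_set_scope.
Local Open Scope ring_scope.

Section RootGalleries.
Variables (R : realType) (d : nat).

Local Notation E := 'rV[R]_d.

Definition dot (u v : E) : R := \sum_(i < d) u ord0 i * v ord0 i.

Definition hyp (a : E) : set E := [set x | dot x a = 0].

Definition refl (a x : E) : E := x - ((2 * dot x a) / dot a a) *: a.

Definition root_system (Phi : seq E) : Prop :=
  [/\ uniq Phi, (0 : E) \notin Phi,
      (forall a b, a \in Phi -> b \in Phi -> refl a b \in Phi) &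
      (forall a b, a \in Phi -> b \in Phi ->
         (exists c : R, b = c *: a) -> b = a \/ b = - a)].

Definition root_subsystem (Phi Psi : seq E) : Prop :=
  [/\ Psi != [::], {subset Psi <= Phi} &
      (forall a b, a \in Psi -> b \in Psi -> refl a b \in Psi)].

Definition in_span (X : seq E) (v : E) : Prop :=
  exists c : E -> R, v = \sum_(b <- X) c b *: b.

Definition saturated (Phi Psi : seq E) : Prop :=
  forall b, b \in Phi -> in_span Psi b -> b \in Psi.

Definition regular (X : seq E) : set E :=
  [set x | forall a, a \in X -> dot x a != 0].

Definition chamber (X : seq E) (C : set E) : Prop :=
  exists2 x, regular X x & C = connected_component (regular X) x.

Definition chamber_of (X : seq E) (C : set E) : set E :=
  \bigcup_(D in [set D | chamber X D /\ C `<=` D]) D.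

(* C and C' are connected through L_alpha: the intersection of their closures
   with L_alpha has nonempty interior in L_alpha (relative topology). *)
Definition connected_through (C C' : set E) (a : E) : Prop :=
  exists2 x, hyp a x &
    \forall y \near x, hyp a y -> (closure C `&` closure C' `&` hyp a) y.

(* Galleries (C_0, L_{alpha_1}, C_1, ..., L_{alpha_n}, C_n): length n,
   chambers gch 0 .. gch n, roots grt 1 .. grt n (values outside are junk). *)
Record gallery := Gallery { glen : nat; gch : nat -> set E; grt : nat -> E }.

Definition gallery_in (X : seq E) (G : gallery) : Prop :=
  (forall j, (j <= glen G)%N -> chamber X (gch G j)) /\
  (forall j, (1 <= j <= glen G)%N ->
     grt G j \in X /\ connected_through (gch G j.-1) (gch G j) (grt G j)).

Definition subgallery (G : gallery) (i j : nat) : gallery :=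
  Gallery (j - i) (fun t => gch G (i + t)) (fun t => grt G (i + t)).

Definition gunion (G H : gallery) : gallery :=
  Gallery (glen G + glen H)
    (fun t => if (t <= glen G)%N then gch G t else gch H (t - glen G))
    (fun t => if (t <= glen G)%N then grt G t else grt H (t - glen G)).

Fixpoint gunionN (D : nat -> gallery) (k : nat) : gallery :=
  match k with
  | 0 => D 0%N
  | k'.+1 => gunion (gunionN D k') (D k)
  end.

Definition Iidx (Psi : seq E) (G : gallery) : seq nat :=
  [seq i <- iota 1 (glen G) | grt G i \in Psi].

Definition gal_restrict (Psi : seq E) (G : gallery) : gallery :=
  let s := 0%N :: Iidx Psi G in
  Gallery (size (Iidx Psi G))
    (fun j => chamber_of Psi (gch G (nth 0%N s j)))
    (fun j => grt G (nth 0%N s j)).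

Definition posroot (X : seq E) (C : set E) (a : E) : Prop :=
  a \in X /\ (forall e, C e -> 0 < dot e a).

(* the simple system of a positive system P: its indecomposable elements,
   i.e. those not a nonnegative linear combination of the other elements *)
Definition simple_root (P : E -> Prop) (a : E) : Prop :=
  P a /\ ~ (exists (s : seq E) (c : E -> R),
              [/\ (forall b, b \in s -> P b /\ b != a),
                  (forall b, 0 <= c b) & a = \sum_(b <- s) c b *: b]).

Definition lifts_ch (Phi Psi : seq E) (C D : set E) : Prop :=
  forall a, simple_root (posroot Psi D) a -> simple_root (posroot Phi C) a.

Definition lifts (Phi Psi : seq E) (Delta G : gallery) : Prop :=
  [/\ glen Delta = glen G,
      (forall j, (1 <= j <= glen G)%N -> hyp (grt Delta j) = hyp (grt G j)) &
      (forall j, (j <= glen G)%N -> lifts_ch Phi Psi (gch Delta j) (gch G j))].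

Definition separates (b : E) (A B : set E) : Prop :=
  ((forall x, A x -> 0 < dot x b) /\ (forall y, B y -> dot y b < 0)) \/
  ((forall x, A x -> dot x b < 0) /\ (forall y, B y -> 0 < dot y b)).

Definition ppair (Delta Gamma : gallery) (p : nat -> nat) : Prop :=
  [/\ (forall i, (1 <= i <= glen Delta)%N -> (1 <= p i <= glen Gamma)%N),
      (forall i j, (1 <= i)%N -> (i < j)%N -> (j <= glen Delta)%N -> (p i < p j)%N) &
      (forall i, (1 <= i <= glen Delta)%N ->
         hyp (grt Gamma (p i)) = hyp (grt Delta i))].

Definition positive_sign (Delta Gamma : gallery) (p : nat -> nat) : Prop :=
  forall i, (1 <= i <= glen Delta)%N ->
    ~ separates (grt Delta i) (gch Delta i) (gch Gamma (p i)).

Definition positive_cosign (Delta Gamma : gallery) (p : nat -> nat) : Prop :=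
  forall i, (1 <= i <= glen Delta)%N ->
    ~ separates (grt Delta i) (gch Delta i.-1) (gch Gamma (p i).-1).

End RootGalleries.

(* Main.v *)
Require Import Defs.
From HB Require Import structures.
From mathcomp Require Import all_boot all_order all_algebra.
From mathcomp Require Import all_classical all_reals all_analysis.
From mathcomp Require Import lra.
Import Order.TTheory GRing.Theory Num.Theory.
Import numFieldNormedType.Exports.
Local Open Scope classical_set_scope.
Local Open Scope ring_scope.
Set Implicit Arguments. Unset Strict Implicit. Unset Printing Implicit Defensive.

Section Geo.
Variables (R : realType) (d : nat).
Local Notation E := 'rV[R]_d.
Local Notation dot := (@dot R d).

Lemma dot_cont (a : E) : continuous (fun x : E => dot x a).
Proof.
rewrite /Defs.dot.
apply: (@continuous_big _ _ +%R 0 xpredT add_continuous) => i _.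
move=> x; apply: (@continuousM _ _ (fun M : E => M ord0 i) (fun _ => a ord0 i)).
  exact: coord_continuous.
exact: cst_continuous.
Qed.

Lemma dotDl (x y a : E) : dot (x + y) a = dot x a + dot y a.
Proof. by rewrite /Defs.dot -big_split /=; apply: eq_bigr => i _; rewrite mxE mulrDl. Qed.
Lemma dotZl (c : R) (x a : E) : dot (c *: x) a = c * dot x a.
Proof. by rewrite /Defs.dot mulr_sumr; apply: eq_bigr => i _; rewrite mxE mulrA. Qed.
Lemma dotC (x a : E) : dot x a = dot a x.
Proof. by rewrite /Defs.dot; apply: eq_bigr => i _; rewrite mulrC. Qed.
Lemma dotNl (x a : E) : dot (- x) a = - dot x a.
Proof. by rewrite -scaleN1r dotZl mulN1r. Qed.
Lemma dotBl (x y a : E) : dot (x - y) a = dot x a - dot y a.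
Proof. by rewrite dotDl dotNl. Qed.
Lemma dotDr (x y a : E) : dot a (x + y) = dot a x + dot a y.
Proof. by rewrite dotC dotDl !(dotC a). Qed.
Lemma dotZr (c : R) (x a : E) : dot a (c *: x) = c * dot a x.
Proof. by rewrite dotC dotZl dotC. Qed.
Lemma dotNr (x a : E) : dot a (- x) = - dot a x.
Proof. by rewrite dotC dotNl dotC. Qed.
Lemma dotBr (x y a : E) : dot a (x - y) = dot a x - dot a y.
Proof. by rewrite dotDr dotNr. Qed.
Lemma dot0l (a : E) : dot 0 a = 0.
Proof. by rewrite /Defs.dot big1 // => i _; rewrite mxE mul0r. Qed.
Lemma dot_sumr (T : Type) (s : seq T) (F : T -> E) (a : E) :
  dot a (\sum_(t <- s) F t) = \sum_(t <- s) dot a (F t).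
Proof.
elim: s => [|t s IH]; first by rewrite !big_nil dotC dot0l.
by rewrite !big_cons dotDr IH.
Qed.
Lemma dotxx0 (x : E) : dot x x = 0 -> x = 0.
Proof.
move=> H; apply/rowP => i; rewrite mxE.
have : \sum_(j < d) x ord0 j * x ord0 j = 0 := H.
move/eqP; rewrite psumr_eq0; last by move=> j _; rewrite -expr2 sqr_ge0.
move/allP => /(_ i (mem_index_enum i)) /implyP /(_ isT).
by rewrite mulf_eq0 orbb => /eqP.
Qed.

Lemma hyp_sub_par (a b : E) : a != 0 ->
  (forall v, dot v a = 0 -> dot v b = 0) -> b = (dot b a / dot a a) *: a.
Proof.
move=> a0 H.
have aa0 : dot a a != 0 by apply/eqP => /dotxx0; apply/eqP.
pose c := dot b a / dot a a.
have wa : dot (b - c *: a) a = 0 by rewrite dotBl dotZl /c divfK // subrr.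
have wb := H _ wa.
have ww : dot (b - c *: a) (b - c *: a) = 0.
  by rewrite dotBr dotZr wb wa mulr0 subrr.
by apply/eqP; rewrite -subr_eq0; apply/eqP/dotxx0.
Qed.


Lemma open_dpos (a : E) : open [set y : E | 0 < dot y a].
Proof.
have -> : [set y : E | 0 < dot y a] = (fun y => dot y a) @^-1` [set r : R | r > 0] by [].
apply: open_comp; last exact: open_gt.
by move=> x _; apply: dot_cont.
Qed.

Lemma closed_dnneg (a : E) : closed [set y : E | 0 <= dot y a].
Proof.
have -> : [set y : E | 0 <= dot y a] = (fun y => dot y a) @^-1` [set r : R | 0 <= r] by [].
apply: preimage_closed; last exact: closed_ge.
by move=> x _; apply: dot_cont.
Qed.

Lemma closed_dnpos (a : E) : closed [set y : E | dot y a <= 0].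
Proof.
have -> : [set y : E | dot y a <= 0] = (fun y => dot y a) @^-1` [set r : R | r <= 0] by [].
apply: preimage_closed; last exact: closed_le.
by move=> x _; apply: dot_cont.
Qed.

Lemma conn_sign (A : set E) (a z : E) : connected A ->
  (forall y, A y -> dot y a != 0) -> A z -> 0 < dot z a ->
  forall y, A y -> 0 < dot y a.
Proof.
move=> cA nz Az pz y Ay.
have : A `&` [set y | 0 < dot y a] = A.
  apply: cA.
  - by exists z.
  - by exists [set y | 0 < dot y a] => //; apply: open_dpos.
  - exists [set y | 0 <= dot y a]; first exact: closed_dnneg.
    apply/seteqP; split => x [Ax Px]; split => //=.
      by apply: ltW.
    by rewrite lt_neqAle eq_sym nz.
by move=> eq; move: Ay; rewrite -eq => -[].
Qed.

Lemma conn_sign_neg (A : set E) (a z : E) : connected A ->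
  (forall y, A y -> dot y a != 0) -> A z -> dot z a < 0 ->
  forall y, A y -> dot y a < 0.
Proof.
move=> cA nz Az pz y Ay.
have := @conn_sign A (- a) z cA _ Az _ y Ay.
rewrite !dotNr !oppr_gt0; apply.
  by move=> x Ax; rewrite dotNr oppr_eq0 nz.
by [].
Qed.

Lemma chamber_nonempty (X : seq E) C : chamber X C -> exists y, C y.
Proof.
by case=> x rx ->; exists x; apply: connected_component_refl.
Qed.

Lemma chamber_sign (X : seq E) C (a : E) : chamber X C -> a \in X ->
  (forall y, C y -> 0 < dot y a) \/ (forall y, C y -> dot y a < 0).
Proof.
case=> x rx -> aX.
have cc := @component_connected _ (regular X) x.
have nz : forall y, connected_component (regular X) x y -> dot y a != 0.
  by move=> y /connected_component_sub /(_ a aX).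
have xx := connected_component_refl rx.
case: (ltgtP (dot x a) 0) => h.
- by right; apply: conn_sign_neg h.
- by left; apply: conn_sign h.
- by move: (rx a aX); rewrite h eqxx.
Qed.


Lemma chof_pos (X : seq E) C (a : E) z : C z -> a \in X ->
  (forall y, C y -> 0 < dot y a) -> forall y, chamber_of X C y -> 0 < dot y a.
Proof.
move=> Cz aX Cp y [D [[x rx ->] CD] Dy].
apply: (@conn_sign _ a z _ _ (CD _ Cz)) => //.
- exact: component_connected.
- by move=> w /connected_component_sub /(_ a aX).
- exact: Cp.
Qed.

Lemma chof_sub (Phi Psi : seq E) C : chamber Phi C -> {subset Psi <= Phi} ->
  C `<=` chamber_of Psi C.
Proof.
move=> [x rx ->] sub y Cy.
have rx' : regular Psi x by move=> a /sub; apply: rx.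
rewrite /chamber_of; exists (connected_component (regular Psi) x); last first.
  apply: connected_component_max (Cy).
  - exact: connected_component_refl.
  - move=> w /connected_component_sub rw a /sub; exact: rw.
  - exact: component_connected.
split; first by exists x.
apply: connected_component_max.
- exact: connected_component_refl.
- move=> w /connected_component_sub rw a /sub; exact: rw.
- exact: component_connected.
Qed.

Lemma cross_point (C C' : set E) (a al : E) : connected_through C C' a ->
  (exists v, dot v a = 0 /\ dot v al != 0) ->
  exists y, [/\ closure C y, closure C' y & dot y al != 0].
Proof.
move=> [x hx nx] [v [va val]].
have [xal|xal] := eqVneq (dot x al) 0; last first.
  have := topology_structure.nbhs_singleton nx; move=> /(_ hx) [[c1 c2] _].
  by exists x.
have gc : (fun e : R => x + e *: v) @ (nbhs (0:R)) --> x + 0 *: v.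
  apply: cvgD; first exact: cvg_cst.
  apply: cvgZr_tmp; exact: cvg_id.
rewrite scale0r addr0 in gc.
have := gc _ nx; move=> /nbhs_ballP [e e0 be].
have hb : ball (0:R) e (e / 2).
  rewrite -ball_normE /= sub0r normrN gtr0_norm ?divr_gt0 //.
  by rewrite ltr_pdivrMr // ltr_pMr // ltr1n.
have := be _ hb => /=.
have hy : hyp a (x + (e / 2) *: v).
  by rewrite /hyp /= dotDl dotZl va mulr0 addr0.
move=> /(_ hy) [[c1 c2] _].
exists (x + (e / 2) *: v); split => //.
rewrite dotDl dotZl xal add0r mulf_neq0 //.
by rewrite gt_eqF // divr_gt0.
Qed.


Lemma closure_nneg (C : set E) (al : E) : (forall y, C y -> 0 <= dot y al) ->
  forall y, closure C y -> 0 <= dot y al.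
Proof.
move=> H y cy.
have : closure [set y | 0 <= dot y al] y by apply: (closureS H).
have [e _] := closure_id [set y : E | 0 <= dot y al].
by rewrite -(e (@closed_dnneg al)).
Qed.

Lemma closure_npos (C : set E) (al : E) : (forall y, C y -> dot y al <= 0) ->
  forall y, closure C y -> dot y al <= 0.
Proof.
move=> H y cy.
have : closure [set y | dot y al <= 0] y by apply: (closureS H).
have [e _] := closure_id [set y : E | dot y al <= 0].
by rewrite -(e (@closed_dnpos al)).
Qed.

Lemma cross (Phi : seq E) (C C' : set E) (a al : E) : chamber Phi C' ->
  al \in Phi -> connected_through C C' a ->
  (exists v, dot v a = 0 /\ dot v al != 0) ->
  (forall y, C y -> 0 < dot y al) -> forall y, C' y -> 0 < dot y al.
Proof.
move=> ch alP ct ex pos.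
have [y [c1 c2 nz]] := cross_point ct ex.
case: (chamber_sign ch alP) => // neg.
have h1 := closure_nneg (fun y Cy => ltW (pos y Cy)) c1.
have h2 := closure_npos (fun y Cy => ltW (neg y Cy)) c2.
by move: nz; rewrite eq_le h1 h2.
Qed.

Lemma nonpar_v (a al : E) : a != 0 -> (forall c : R, al != c *: a) ->
  exists v, dot v a = 0 /\ dot v al != 0.
Proof.
move=> a0 H; apply: contrapT => N.
have := @hyp_sub_par a al a0.
have : forall v, dot v a = 0 -> dot v al = 0.
  move=> v va; apply: contrapT => nv; apply: N; exists v; split => //.
  exact/eqP.
move=> h /(_ h) e; by move: (H (dot al a / dot a a)); rewrite -e eqxx.
Qed.

End Geo.

Section Cone.
Variables (R : realType) (d : nat).
Local Notation E := 'rV[R]_d.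
Local Notation dot := (@dot R d).

Definition vl (l : seq (R * E)) : E := \sum_(x <- l) x.1 *: x.2.
Definition scl (c : R) (l : seq (R * E)) := [seq (c * x.1, x.2) | x <- l].

Definition psimple (S : seq E) (b : E) : Prop :=
  b \in S /\ ~ exists l, (forall x, x \in l -> [/\ x.2 \in S, x.2 != b & 0 <= x.1])
                          /\ b = vl l.

Definition cone (Q : E -> Prop) (v : E) : Prop :=
  exists l, (forall x, x \in l -> Q x.2 /\ 0 <= x.1) /\ v = vl l.

Definition red (S : seq E) := forall a b, a \in S -> b \in S ->
  forall c : R, b = c *: a -> b = a \/ b = - a.

Lemma vl_cat l1 l2 : vl (l1 ++ l2) = vl l1 + vl l2.
Proof. by rewrite /vl big_cat. Qed.

Lemma vl_cons x l : vl (x :: l) = x.1 *: x.2 + vl l.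
Proof. by rewrite /vl big_cons. Qed.

Lemma vl_scl c l : vl (scl c l) = c *: vl l.
Proof.
by rewrite /vl /scl big_map scaler_sumr; apply: eq_bigr => x _ /=; rewrite scalerA.
Qed.

Lemma vl_split v l : vl l = (\sum_(x <- l | x.2 == v) x.1) *: v +
   vl [seq x <- l | x.2 != v].
Proof.
elim: l => [|x l IH]; first by rewrite /vl !big_nil scale0r add0r.
rewrite vl_cons IH big_cons /=.
case: eqP => [->|ne] /=.
  by rewrite scalerDl addrA.
by rewrite vl_cons addrCA.
Qed.

Lemma h_vl (e : E) l : dot e (vl l) = \sum_(x <- l) x.1 * dot e x.2.
Proof. by rewrite /vl dot_sumr; apply: eq_bigr => x _; rewrite dotZr. Qed.

Lemma vl_nonneg (e : E) l : (forall x, x \in l -> 0 <= x.1 /\ 0 < dot e x.2) ->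
  0 <= dot e (vl l).
Proof.
move=> H; rewrite h_vl big_seq; apply: sumr_ge0 => x xl.
by have [h1 h2] := H x xl; apply: mulr_ge0 => //; apply: ltW.
Qed.

Lemma vl_zero (e : E) l : (forall x, x \in l -> 0 <= x.1 /\ 0 < dot e x.2) ->
  dot e (vl l) = 0 -> vl l = 0.
Proof.
elim: l => [|x l IH] H; first by rewrite /vl big_nil.
have Hl : forall y, y \in l -> 0 <= y.1 /\ 0 < dot e y.2.
  by move=> y yl; apply: H; rewrite inE yl orbT.
have [h1 h2] := H x (mem_head _ _).
rewrite vl_cons dotDr dotZr => /eqP.
rewrite paddr_eq0; first last.
- exact: vl_nonneg.
- by apply: mulr_ge0 => //; apply: ltW.
case/andP => /eqP a /eqP b.
rewrite (IH Hl b) addr0.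
move: a => /eqP; rewrite mulf_eq0 (gt_eqF h2) orbF => /eqP ->.
by rewrite scale0r.
Qed.

Lemma cone_mono (Q Q' : E -> Prop) v : (forall w, Q w -> Q' w) -> cone Q v -> cone Q' v.
Proof.
move=> H [l [Hl ->]]; exists l; split => // x xl.
by have [? ?] := Hl x xl; split => //; apply: H.
Qed.

Lemma cone_vl (Q : E -> Prop) l : (forall x, x \in l -> cone Q x.2 /\ 0 <= x.1) ->
  cone Q (vl l).
Proof.
elim: l => [|x l IH] H.
  by exists [::]; split => //; rewrite /vl !big_nil.
have [[l' [Hl' e']] c0] := H x (mem_head _ _).
have [l'' [Hl'' e'']] : cone Q (vl l).
  by apply: IH => y yl; apply: H; rewrite inE yl orbT.
exists (scl x.1 l' ++ l''); split.
  move=> y; rewrite mem_cat => /orP [/mapP [z zl ->]|yl] /=.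
    by have [? ?] := Hl' z zl; split => //; apply: mulr_ge0.
  exact: Hl''.
by rewrite vl_cat vl_scl -e' -e'' vl_cons.
Qed.

Lemma sum_nonneg (l : seq (R * E)) (P : pred (R * E)) :
  (forall x, x \in l -> 0 <= x.1) -> 0 <= \sum_(x <- l | P x) x.1.
Proof.
move=> H; rewrite big_seq_cond; apply: sumr_ge0 => x /andP [xl _]; exact: H.
Qed.

Lemma psimple_step (e : E) (S : seq E) (a0 b : E) (l0 : seq (R * E)) :
  (forall x, x \in S -> 0 < dot e x) -> red S ->
  (forall x, x \in l0 -> [/\ x.2 \in S, x.2 != a0 & 0 <= x.1]) -> a0 = vl l0 ->
  a0 \in S ->
  psimple [seq y <- S | y != a0] b -> psimple S b.
Proof.
move=> pos rS Hl0 e0 a0S [].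
rewrite mem_filter => /andP [ba0 bS] nd; split => // -[l [Hl el]].
apply: nd.
pose mu := \sum_(x <- l | x.2 == a0) x.1.
pose l1 := [seq x <- l | x.2 != a0].
pose ka := \sum_(x <- l0 | x.2 == b) x.1.
pose l2 := [seq x <- l0 | x.2 != b].
have mu0 : 0 <= mu by apply: sum_nonneg => x /Hl [].
have ka0 : 0 <= ka by apply: sum_nonneg => x /Hl0 [].
have e1 : b = mu *: a0 + vl l1 by rewrite el [in LHS](vl_split a0).
have e2 : a0 = ka *: b + vl l2 by rewrite e0 [in LHS](vl_split b).
pose L := l1 ++ scl mu l2.
have HL : forall x, x \in L -> [/\ x.2 \in [seq y <- S | y != a0], x.2 != b & 0 <= x.1].
  move=> x; rewrite mem_cat => /orP [|/mapP [z]].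
    move=> xl1; have /andP [xa0 xl] : (x.2 != a0) && (x \in l) by move: xl1; rewrite mem_filter.
    have [? ? ?] := Hl x xl; split => //.
    by rewrite mem_filter xa0.
  move=> zl2 -> /=; have /andP [zb zl] : (z.2 != b) && (z \in l0) by move: zl2; rewrite mem_filter.
  have [h1 h2 h3] := Hl0 z zl; split => //.
    by rewrite mem_filter h2 h1.
  by apply: mulr_ge0.
have eL : b = (mu * ka) *: b + vl L.
  by rewrite vl_cat vl_scl -scalerA addrCA -scalerDr -e2 addrC -e1.
have HLp : forall x, x \in L -> 0 <= x.1 /\ 0 < dot e x.2.
  move=> x /HL [h1 h2 h3]; split => //; apply: pos.
  by move: h1; rewrite mem_filter => /andP [].
have hb : 0 < dot e b := pos b bS.
have hL := vl_nonneg HLp.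
have : dot e b = (mu * ka) * dot e b + dot e (vl L).
  by rewrite {1}eL dotDr dotZr.
move=> hh.
have [lt1|ge1] := ltP (mu * ka) 1.
  exists (scl (1 - mu * ka)^-1 L); split.
    move=> x /mapP [z zL ->] /=.
    have [? ? ?] := HL z zL; split => //.
    by apply: mulr_ge0 => //; rewrite invr_ge0 subr_ge0 ltW.
  rewrite vl_scl.
  apply: (@scalerI _ _ (1 - mu * ka)); first by rewrite subr_eq0 gt_eqF.
  rewrite scalerA divff ?subr_eq0 ?gt_eqF // scale1r scalerBl scale1r.
  by apply/eqP; rewrite subr_eq addrC -eL.
exfalso.
have mk1 : mu * ka = 1.
  apply/eqP; rewrite eq_le ge1 andbT.
  have : (mu * ka) * dot e b <= dot e b by rewrite [X in _ <= X]hh lerDl.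
  by rewrite ger_pMl.
move: hh; rewrite mk1 mul1r => /eqP; rewrite -subr_eq0 opprD addrA subrr add0r oppr_eq0 => /eqP hz.
have Hl1 : forall x, x \in l1 -> 0 <= x.1 /\ 0 < dot e x.2.
  by move=> x xl; apply: HLp; rewrite mem_cat xl.
have Hl2 : forall x, x \in scl mu l2 -> 0 <= x.1 /\ 0 < dot e x.2.
  by move=> x xl; apply: HLp; rewrite mem_cat xl orbT.
have : dot e (vl l1) = 0.
  move: hz; rewrite vl_cat dotDr => /eqP.
  rewrite paddr_eq0; [by case/andP => /eqP|exact: vl_nonneg|exact: vl_nonneg].
move=> /(vl_zero Hl1) z1.
move: e1; rewrite z1 addr0 => e1.
have [] := rS a0 b a0S bS mu e1.
  by move=> eb; move: ba0; rewrite eb eqxx.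
move=> eb; have h2 := pos a0 a0S; move: hb; rewrite eb dotNr oppr_gt0 => h1.
by move: (lt_trans h1 h2); rewrite ltxx.
Qed.

Lemma cone_lemma (e : E) n : forall (S : seq E), (size S <= n)%N ->
  (forall x, x \in S -> 0 < dot e x) -> red S ->
  forall a, a \in S -> cone (psimple S) a.
Proof.
elim: n => [|n IH] S sz pos rS a aS.
  by clear pos rS; move: aS sz; case: S.
have [allp|] := pselect (forall b, b \in S -> psimple S b).
  exists [:: (1, a)]; split.
    by move=> x; rewrite inE => /eqP -> /=; split => //; apply: allp.
  by rewrite vl_cons /vl big_nil addr0 scale1r.
move=> /existsNP [a0 /not_implyP [a0S na0]].
have [l0 [Hl0 e0]] : exists l0, (forall x, x \in l0 -> [/\ x.2 \in S, x.2 != a0 & 0 <= x.1])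
                          /\ a0 = vl l0.
  by apply: contrapT => N; apply: na0; split.
pose S' := [seq y <- S | y != a0].
have sz' : (size S' <= n)%N.
  rewrite -ltnS; apply: leq_trans sz.
  rewrite size_filter -(count_predC (fun y => y != a0)) -addn1 leq_add2l.
  by rewrite -has_count; apply/hasP; exists a0 => //=; rewrite negbK.
have pos' : forall x, x \in S' -> 0 < dot e x.
  by move=> x; rewrite mem_filter => /andP [_]; apply: pos.
have rS' : red S'.
  by move=> x y; rewrite !mem_filter => /andP [_ xS] /andP [_ yS]; apply: rS.
have IH' := IH S' sz' pos' rS'.
have mono : forall v, cone (psimple S') v -> cone (psimple S) v.
  by move=> v; apply: cone_mono => w; apply: (psimple_step pos rS Hl0 e0 a0S).
have [->|ne] := eqVneq a a0.
  rewrite e0; apply: cone_vl => x xl.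
  have [h1 h2 h3] := Hl0 x xl; split => //.
  by apply: mono; apply: IH'; rewrite mem_filter h2.
by apply: mono; apply: IH'; rewrite mem_filter ne.
Qed.

Lemma psimple_simple (S : seq E) (P : E -> Prop) b :
  (forall v, P v <-> v \in S) -> psimple S b -> simple_root P b.
Proof.
move=> hP [bS nd]; split; first exact/hP.
move=> [s [c [H1 H2 H3]]]; apply: nd.
exists [seq (c y, y) | y <- s]; split.
  move=> x /mapP [y ys ->] /=; have [py yb] := H1 y ys.
  by split => //; apply/hP.
by rewrite H3 /vl big_map.
Qed.

End Cone.

Section Lift.
Variables (R : realType) (d : nat).
Local Notation E := 'rV[R]_d.
Local Notation dot := (@dot R d).

Lemma dotxx_neq0 (a : E) : a != 0 -> dot a a != 0.
Proof. by move=> a0; apply/eqP => /dotxx0; apply/eqP. Qed.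

Lemma root_neq0 (Phi : seq E) a : root_system Phi -> a \in Phi -> a != 0.
Proof. by case=> _ n0 _ _ aP; apply/eqP => a0; move: n0; rewrite -a0 aP. Qed.

Lemma neg_in (Phi Psi : seq E) a : root_system Phi -> root_subsystem Phi Psi ->
  a \in Psi -> - a \in Psi.
Proof.
move=> rs [_ sub cl] aP.
have := cl a a aP aP; rewrite /refl.
have aa := dotxx_neq0 (root_neq0 rs (sub _ aP)).
rewrite mulfK //.
have -> : a - 2 *: a = - a.
  by rewrite -[2]/(1+1) scalerDl scale1r opprD addrA subrr add0r.
by [].
Qed.

Lemma par_root (Phi : seq E) a b : root_system Phi -> a \in Phi -> b \in Phi ->
  (forall v, dot v a = 0 -> dot v b = 0) -> b = a \/ b = - a.
Proof.
move=> rs aP bP H.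
have e := hyp_sub_par (root_neq0 rs aP) H.
by case: rs => _ _ _ r4; apply: r4 => //; exists (dot b a / dot a a).
Qed.

Lemma hyp_par_root (Phi : seq E) a b : root_system Phi -> a \in Phi -> b \in Phi ->
  hyp a = hyp b -> b = a \/ b = - a.
Proof.
move=> rs aP bP H; apply: par_root rs aP bP _ => v va.
have : hyp b v by rewrite -H.
by [].
Qed.

Lemma nosep (A B : set E) (al : E) : (exists y, A y) -> (exists y, B y) ->
  (forall y, A y -> 0 <= dot y al) -> (forall y, B y -> 0 <= dot y al) ->
  ~ separates al A B /\ ~ separates (- al) A B.
Proof.
move=> [ya Aa] [yb Bb] HA HB; split.
  case=> -[h1 h2].
    by have := h2 _ Bb; have := HB _ Bb; lra.
  by have := h1 _ Aa; have := HA _ Aa; lra.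
case=> -[h1 h2].
  by have := h1 _ Aa; have := HA _ Aa; rewrite dotNr; lra.
by have := h2 _ Bb; have := HB _ Bb; rewrite dotNr; lra.
Qed.

Lemma lift_pos (Phi Psi : seq E) (C0 C' : set E) (al : E) : root_system Phi ->
  {subset Psi <= Phi} -> chamber Phi C0 ->
  al \in Psi -> lifts_ch Phi Psi C' (chamber_of Psi C0) ->
  (forall y, C0 y -> 0 < dot y al) -> forall y, C' y -> 0 <= dot y al.
Proof.
move=> rs sub ch alP lf pos y C'y.
have [z C0z] := chamber_nonempty ch.
set D := chamber_of Psi C0.
have Dz : D z by apply: (chof_sub ch sub).
pose S := [seq a <- Psi | `[< posroot Psi D a >]].
have hP : forall v, posroot Psi D v <-> v \in S.
  move=> v; rewrite mem_filter; split.
    by move=> h; rewrite (asboolT h) (proj1 h).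
  by case/andP => /asboolP.
have alS : al \in S.
  apply/hP; split => //; exact: (chof_pos C0z alP pos).
have posS : forall x, x \in S -> 0 < dot z x.
  by move=> x /hP [_]; apply.
have rS : red S.
  move=> a b /hP [aP _] /hP [bP _] c e.
  case: rs => _ _ _ r4; apply: r4; [exact: sub|exact: sub|by exists c].
have [l [Hl ->]] := cone_lemma (leqnn (size S)) posS rS alS.
apply: vl_nonneg => x xl.
have [h1 h2] := Hl x xl; split => //.
have := lf _ (psimple_simple hP h1).
by case=> -[_ H] _; apply: H.
Qed.

End Lift.

Section Comb.
Variables (R : realType) (d : nat).
Local Notation E := 'rV[R]_d.

Lemma Iidx_mem (Psi : seq E) G t :
  (t \in Iidx Psi G) = [&& (1 <= t)%N, (t <= glen G)%N & grt G t \in Psi].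
Proof.
rewrite /Iidx mem_filter mem_iota.
by case: (grt G t \in Psi); rewrite ?andbF ?andbT //= add1n ltnS.
Qed.

Lemma Iidx_sorted (Psi : seq E) G : sorted ltn (Iidx Psi G).
Proof. by apply: sorted_filter; [exact: ltn_trans | exact: iota_ltn_sorted]. Qed.

Lemma Iidx_lt (Psi : seq E) G j1 j2 : (j1 < j2)%N -> (j2 < size (Iidx Psi G))%N ->
  (nth 0 (Iidx Psi G) j1 < nth 0 (Iidx Psi G) j2)%N.
Proof.
move=> h12 h2.
apply: (sorted_ltn_nth ltn_trans 0%N (Iidx_sorted Psi G)) => //.
by rewrite inE (ltn_trans h12).
Qed.

Lemma Iidx_le (Psi : seq E) G j1 j2 : (j1 <= j2)%N -> (j2 < size (Iidx Psi G))%N ->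
  (nth 0 (Iidx Psi G) j1 <= nth 0 (Iidx Psi G) j2)%N.
Proof.
rewrite leq_eqVlt => /orP [/eqP ->//|h] h2.
by apply: ltnW; apply: Iidx_lt.
Qed.

Lemma Iidx_gap (Psi : seq E) G j t : (j < size (Iidx Psi G))%N ->
  (nth 0%N (0%N :: Iidx Psi G) j < t)%N -> (t < nth 0 (Iidx Psi G) j)%N ->
  t \notin Iidx Psi G.
Proof.
move=> js h1 h2; apply/negP => ts.
have ix : (index t (Iidx Psi G) < size (Iidx Psi G))%N by rewrite index_mem.
have et := nth_index 0%N ts.
case: (leqP j (index t (Iidx Psi G))) => h.
  by have := Iidx_le h ix; rewrite et leqNgt h2.
move: h1; case: j js h h2 => [//|j] js h h2 /= h1.
have hle : (index t (Iidx Psi G) <= j)%N by rewrite -ltnS.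
by have := Iidx_le hle (ltnW js); rewrite et leqNgt h1.
Qed.

Definition off (D : nat -> gallery R d) l := (\sum_(t < l) glen (D t))%N.

Lemma offS D l : off D l.+1 = (off D l + glen (D l))%N.
Proof. by rewrite /off big_ord_recr. Qed.

Lemma off_mono D l l' : (l <= l')%N -> (off D l <= off D l')%N.
Proof.
move=> /subnK <-; elim: (l' - l)%N => [//|n IH].
by rewrite addSn offS (leq_trans IH) // leq_addr.
Qed.

Lemma glen_U D m : glen (gunionN D m) = off D m.+1.
Proof.
elim: m => [|m IH]; first by rewrite /off big_ord1.
by rewrite /= IH [RHS]offS.
Qed.

Lemma grt_U D m l j : (l <= m)%N -> (1 <= j <= glen (D l))%N ->
  grt (gunionN D m) (off D l + j) = grt (D l) j.
Proof.
elim: m => [|m IH].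
  by rewrite leqn0 => /eqP -> _ /=; rewrite /off big_ord0.
rewrite leq_eqVlt => /orP [/eqP ->|lm] hj /=.
  rewrite glen_U; case: ifP => h.
    case/andP: hj => j1 _; move: h; rewrite -[X in (_ <= X)%N]addn0 leq_add2l leqn0.
    by move=> /eqP j0; move: j1; rewrite j0.
  by rewrite addKn.
rewrite glen_U ifT; first exact: IH.
by rewrite (leq_trans _ (off_mono D lm)) // offS leq_add2l; case/andP: hj.
Qed.

Lemma gch_U D m l j :
  (forall l, (l < m)%N -> gch (D l) (glen (D l)) = gch (D l.+1) 0%N) ->
  (l <= m)%N -> (j <= glen (D l))%N ->
  gch (gunionN D m) (off D l + j) = gch (D l) j.
Proof.
elim: m l j => [|m IH] l j ch.
  by rewrite leqn0 => /eqP -> _ /=; rewrite /off big_ord0.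
have ch' : forall l, (l < m)%N -> gch (D l) (glen (D l)) = gch (D l.+1) 0%N.
  by move=> l' h; apply: ch; apply: ltnW.
rewrite leq_eqVlt => /orP [/eqP ->|lm] hj /=.
  rewrite glen_U; case: ifP => h.
    have j0 : j = 0%N by move: h; rewrite -{2}(addn0 (off D m.+1)) leq_add2l leqn0 => /eqP.
    rewrite j0 addn0 offS (IH m (glen (D m)) ch' (leqnn m) (leqnn _)).
    by rewrite ch // j0.
  by rewrite addKn.
rewrite glen_U ifT; first exact: IH.
by rewrite (leq_trans _ (off_mono D lm)) // offS leq_add2l.
Qed.

Lemma block D k i : (1 <= i)%N -> (i <= off D k)%N ->
  exists l, [/\ (l < k)%N, (off D l < i)%N & (i <= off D l.+1)%N].
Proof.
elim: k => [|k IH] i1 ik.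
  by move: ik; rewrite /off big_ord0 leqNgt i1.
case: (leqP i (off D k)) => h.
  by have [l [? ? ?]] := IH i1 h; exists l; split => //; apply: ltnW.
by exists k.
Qed.

End Comb.

Section Main.
Variables (R : realType) (d : nat).
Local Notation E := 'rV[R]_d.
Local Notation dot := (@dot R d).

Lemma walk (Phi : seq E) (G : gallery R d) (al : E) u v :
  gallery_in Phi G -> al \in Phi -> (u <= v)%N -> (v <= glen G)%N ->
  (forall t, (u < t)%N -> (t <= v)%N -> exists w, dot w (grt G t) = 0 /\ dot w al != 0) ->
  (forall y, gch G u y -> 0 < dot y al) -> forall y, gch G v y -> 0 < dot y al.
Proof.
move=> [gc gr] alP uv vG.
elim: v uv vG => [|v IH] uv vG np pos.
  by move: uv; rewrite leqn0 => /eqP e; subst u.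
move: uv; rewrite leq_eqVlt => /orP [/eqP e|uv]; first by subst u.
have vG' : (v <= glen G)%N by apply: ltnW.
have IH' := IH uv vG' (fun t h1 h2 => np t h1 (leqW h2)) pos.
have [_ ct] := gr v.+1 vG.
apply: (cross (gc _ vG) alP ct _ IH').
exact: np.
Qed.

Lemma sign_helper (Phi Psi : seq E) (C0 C1 C' : set E) (al be : E) :
  root_system Phi -> root_subsystem Phi Psi -> al \in Psi ->
  chamber Phi C0 -> chamber Phi C1 -> chamber Phi C' ->
  lifts_ch Phi Psi C' (chamber_of Psi C0) ->
  ((forall y, C0 y -> 0 < dot y al) -> forall y, C1 y -> 0 < dot y al) ->
  ((forall y, C0 y -> 0 < dot y (- al)) -> forall y, C1 y -> 0 < dot y (- al)) ->
  (be = al \/ be = - al) -> ~ separates be C' C1.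
Proof.
move=> rs sub alP ch0 ch1 ch' lf Hp Hn hbe.
have [_ subP _] := sub.
have nalP := neg_in rs sub alP.
have ne' := chamber_nonempty ch'.
have ne1 := chamber_nonempty ch1.
case: (chamber_sign ch0 (subP _ alP)) => h.
  have H1 := lift_pos rs subP ch0 alP lf h.
  have [n1 n2] := nosep ne' ne1 H1 (fun y Cy => ltW (Hp h y Cy)).
  by case: hbe => ->.
have h' : forall y, C0 y -> 0 < dot y (- al) by move=> y /h; rewrite dotNr oppr_gt0.
have H1 := lift_pos rs subP ch0 nalP lf h'.
have [n1 n2] := nosep ne' ne1 H1 (fun y Cy => ltW (Hn h' y Cy)).
by rewrite opprK in n2; case: hbe => ->.
Qed.

End Main.

Unset Implicit Arguments.

Theorem mainTheorem9 (R : realType) (d : nat) (Phi : seq 'rV[R]_d)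
  (Gamma : gallery R d) (k : nat) (idx : nat -> nat)
  (Psi : nat -> seq 'rV[R]_d) (Delta : nat -> gallery R d) (p : nat -> nat) :
  root_system Phi ->
  gallery_in Phi Gamma ->
  (0 < k)%N ->
  idx 0%N = 0%N -> idx k = glen Gamma ->
  (forall l, (l < k)%N -> (idx l <= idx l.+1)%N) ->
  (forall l, (l < k)%N -> root_subsystem Phi (Psi l) /\ saturated Phi (Psi l)) ->
  (forall l, (l < k)%N ->
     gallery_in Phi (Delta l) /\
     lifts Phi (Psi l) (Delta l)
       (gal_restrict (Psi l) (subgallery Gamma (idx l) (idx l.+1)))) ->
  (forall l, (l.+1 < k)%N -> gch (Delta l) (glen (Delta l)) = gch (Delta l.+1) 0%N) ->
  (forall l j, (l < k)%N ->
     (\sum_(t < l) glen (Delta t) < j <= \sum_(t < l.+1) glen (Delta t))%N ->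
     p j = (nth 0%N (Iidx (Psi l) (subgallery Gamma (idx l) (idx l.+1)))
                 (j - \sum_(t < l) glen (Delta t)).-1 + idx l)%N) ->
  let U := gunionN Delta k.-1 in
  [/\ ppair U Gamma p, positive_sign U Gamma p & positive_cosign U Gamma p].
Proof.
move=> rs gG k0 i0 ik imon HPsi HDelta chain Hp U.
have [m km] : exists m, k = m.+1 by exists k.-1; rewrite prednK.
have Um : U = gunionN Delta m by rewrite /U km.
have glU : glen U = off Delta k by rewrite Um glen_U km.
have chain' : forall l, (l < m)%N -> gch (Delta l) (glen (Delta l)) = gch (Delta l.+1) 0%N.
  by move=> l lm; apply: chain; rewrite km.
have idx_mono : forall l l', (l <= l')%N -> (l' <= k)%N -> (idx l <= idx l')%N.
  move=> l l' /subnK <-; elim: (l' - l)%N => [//|n IH] h.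
  rewrite addSn (leq_trans (IH (ltnW h))) //; apply: imon; exact: h.
have blk : forall i, (1 <= i)%N -> (i <= glen U)%N -> exists l j,
    [/\ (l < k)%N, (1 <= j)%N, (j <= glen (Delta l))%N & i = (off Delta l + j)%N].
  move=> i i1; rewrite glU => ik'.
  have [l [lk h1 h2]] := block i1 ik'.
  exists l, (i - off Delta l)%N; split => //.
  - by rewrite subn_gt0.
  - by rewrite leq_subLR -offS.
  - by rewrite subnKC // ltnW.
have key : forall l j, (l < k)%N -> (1 <= j)%N -> (j <= glen (Delta l))%N ->
   [/\ p (off Delta l + j) = (nth 0%N (Iidx (Psi l) (subgallery Gamma (idx l) (idx l.+1))) j.-1 + idx l)%N,
       (idx l < p (off Delta l + j) <= idx l.+1)%N,
       hyp (grt Gamma (p (off Delta l + j))) = hyp (grt U (off Delta l + j)),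
       ~ separates (grt U (off Delta l + j)) (gch U (off Delta l + j)) (gch Gamma (p (off Delta l + j)))
     & ~ separates (grt U (off Delta l + j)) (gch U (off Delta l + j).-1) (gch Gamma (p (off Delta l + j)).-1)].
  move=> l j lk j1 jl.
  set a := idx l; set b := idx l.+1.
  set G := subgallery Gamma a b.
  set s := Iidx (Psi l) G.
  have [sub _] := HPsi l lk.
  have [_ subP _] := sub.
  have [gD [lenD hypD chD]] := HDelta l lk.
  have lenD' : glen (Delta l) = size s by rewrite lenD.
  have hp : p (off Delta l + j) = (nth 0%N s j.-1 + a)%N.
    rewrite (Hp l) //; first by rewrite -/(off Delta l) addKn.
    change (off Delta l < off Delta l + j <= off Delta l.+1)%N.
    by rewrite offS -{1}(addn0 (off Delta l)) ltn_add2l j1 leq_add2l.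
  have jm : (l <= m)%N by rewrite -ltnS -km.
  set q := nth 0%N s j.-1.
  have js : (j.-1 < size s)%N by rewrite -lenD' prednK.
  have qs : q \in s by apply: mem_nth.
  move: (qs); rewrite Iidx_mem => /and3P [q1 qG alP].
  have ab : (a <= b)%N by apply: imon.
  have qb : (q + a <= b)%N by move: qG => /=; rewrite leq_subRL // addnC.
  have bG : (b <= glen Gamma)%N by rewrite -ik; apply: idx_mono.
  have gU : grt U (off Delta l + j) = grt (Delta l) j by rewrite Um grt_U // j1 jl.
  have cU : gch U (off Delta l + j) = gch (Delta l) j by rewrite Um gch_U.
  have cU' : gch U (off Delta l + j).-1 = gch (Delta l) j.-1.
    have -> : (off Delta l + j).-1 = (off Delta l + j.-1)%N by rewrite -!subn1 addnBA.
    by rewrite Um gch_U // (leq_trans _ jl) // leq_pred.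
  have nthj : nth 0%N (0%N :: s) j = q by rewrite -(prednK j1).
  set al := grt Gamma (a + q).
  have alPsi : al \in Psi l by exact: alP.
  have [gGc gGr] := gG.
  have [gDc gDr] := gD.
  have alPhi : al \in Phi := subP _ alPsi.
  have beP : grt (Delta l) j \in Phi by have [] := gDr j; [rewrite j1 jl|].
  have hypj : hyp (grt (Delta l) j) = hyp al.
    by rewrite hypD /=; [rewrite nthj | rewrite j1 -lenD'].
  have hbe : grt (Delta l) j = al \/ grt (Delta l) j = - al.
    by apply: hyp_par_root rs alPhi beP _; rewrite hypj.
  have aqG : (a + q <= glen Gamma)%N by rewrite addnC (leq_trans qb).
  split.
  - exact: hp.
  - by rewrite hp -{1}(add0n a) ltn_add2r q1 qb.
  - by rewrite hp gU hypj addnC.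
  - rewrite gU cU hp addnC.
    apply: (sign_helper rs sub alPsi (gGc _ aqG) (gGc _ aqG) (gDc _ jl)) => //.
    by have := chD j (leq_trans jl (eq_leq lenD)); rewrite /= nthj.
  rewrite gU cU' hp.
  set prev := nth 0%N (0%N :: s) j.-1.
  have pq : (prev < q)%N.
    move: q1; rewrite /prev /q; case e : j.-1 => [//|j'] /= _.
    by apply: Iidx_lt; rewrite // -e.
  have uv : (a + prev <= (q + a).-1)%N.
    by rewrite -ltnS prednK ?addn_gt0 ?q1 // addnC ltn_add2r.
  have vG : ((q + a).-1 <= glen Gamma)%N.
    by rewrite (leq_trans (leq_pred _)) // addnC.
  have np : forall t, (a + prev < t)%N -> (t <= (q + a).-1)%N ->
      exists w, dot w (grt Gamma t) = 0 /\ dot w al != 0.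
    move=> t h1 h2.
    have at' : (a <= t)%N by apply: leq_trans (leq_addr _ _) (ltnW h1).
    set t' := (t - a)%N.
    have et : t = (a + t')%N by rewrite subnKC.
    have pt : (prev < t')%N by rewrite /t' ltn_subRL.
    have tq : (t' < q)%N.
      have tqa : (t < q + a)%N by rewrite (leq_ltn_trans h2) // prednK // addn_gt0 q1.
      by rewrite /t' ltn_subLR // addnC.
    have tns := Iidx_gap js pt tq.
    have gnP : grt Gamma t \notin Psi l.
      move: tns; rewrite Iidx_mem /= -et.
      have -> : (1 <= t')%N by apply: leq_ltn_trans pt.
      have -> : (t' <= b - a)%N by apply: ltnW; apply: leq_trans tq qG.
      by [].
    have t1 : (1 <= t)%N by apply: leq_ltn_trans h1.
    have tG : (t <= glen Gamma)%N by apply: leq_trans h2 vG.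
    have gP : grt Gamma t \in Phi by have [] := gGr t; [rewrite t1 tG|].
    apply: nonpar_v; first exact: root_neq0 rs gP.
    move=> c; apply/eqP => ec.
    have [_ _ _ r4] := rs.
    have [e1|e1] := r4 _ _ gP alPhi (ex_intro _ c ec).
      by move: gnP; rewrite -e1 alPsi.
    have : grt Gamma t = - al by rewrite e1 opprK.
    by move=> e2; move: gnP; rewrite e2 (neg_in rs sub alPsi).
  have ch0 : chamber Phi (gch Gamma (a + prev)) by apply: gGc; apply: leq_trans uv vG.
  apply: (sign_helper rs sub alPsi ch0 (gGc _ vG) (gDc _ (leq_trans (leq_pred _) jl))) => //.
  - have jl' : (j.-1 <= glen (gal_restrict (Psi l) G))%N.
      by rewrite -lenD (leq_trans (leq_pred _) jl).
    by have := chD j.-1 jl'.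
  - exact: walk gG alPhi uv vG np.
  - apply: walk gG (subP _ (neg_in rs sub alPsi)) uv vG _.
    move=> t h1 h2; have [w [w1 w2]] := np t h1 h2.
    by exists w; rewrite dotNr oppr_eq0.
have pbounds : forall i, (1 <= i <= glen U)%N -> (1 <= p i <= glen Gamma)%N.
  move=> i /andP [i1 iU]; have [l [j [lk j1 jl ->]]] := blk i i1 iU.
  have [_ /andP [h1 h2] _ _ _] := key l j lk j1 jl.
  rewrite (leq_ltn_trans _ h1) //= (leq_trans h2) // -ik; exact: idx_mono.
split.
- split => //.
  + move=> i i' i1 ii' i'U.
    have iU : (i <= glen U)%N by apply: ltnW; apply: leq_trans ii' i'U.
    have i'1 : (1 <= i')%N by apply: leq_trans i1 (ltnW ii').
    have [l [j [lk j1 jl ei]]] := blk i i1 iU.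
    have [l' [j' [lk' j1' jl' ei']]] := blk i' i'1 i'U.
    have [ep /andP [h1 h2] _ _ _] := key l j lk j1 jl.
    have [ep' /andP [h1' h2'] _ _ _] := key l' j' lk' j1' jl'.
    rewrite ei ei'.
    case: (ltngtP l l') => hl.
    * apply: leq_ltn_trans h2 (leq_ltn_trans _ h1').
      by apply: idx_mono => //; apply: ltnW.
    * exfalso; move: ii'; rewrite ei ei' ltnNge => /negP; apply.
      apply: leq_trans (leq_addr _ _).
      apply: leq_trans (off_mono Delta hl).
      by rewrite offS leq_add2l.
    * subst l'.
      have jj : (j < j')%N by move: ii'; rewrite ei ei' ltn_add2l.
      rewrite ep ep' ltn_add2r.
      have [_ [lenD _ _]] := HDelta l lk.
      apply: Iidx_lt.
        by rewrite -(prednK j1) -(prednK j1') ltnS in jj.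
      by move: jl'; rewrite lenD /= => h; apply: leq_trans h; rewrite prednK.
  + move=> i /andP [i1 iU]; have [l [j [lk j1 jl ->]]] := blk i i1 iU.
    by have [_ _ h _ _] := key l j lk j1 jl.
- move=> i /andP [i1 iU]; have [l [j [lk j1 jl ->]]] := blk i i1 iU.
  by have [_ _ _ h _] := key l j lk j1 jl.
- move=> i /andP [i1 iU]; have [l [j [lk j1 jl ->]]] := blk i i1 iU.
  by have [_ _ _ _ h] := key l j lk j1 jl.
Qed.
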